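(* There is an $\mathrm{STC{+}C}$-formula $\varphi_D(p,x,z)$ over the vocabulary $\{E\}$ of graphs, with $p$ a number variable and $x,z$ structure variables, such that for every graph $G=(V,E)$, every $i\in N(G)=[0,|V|]$ and every vertex $v\in V$, the set $\{u\in V \mid G\models\varphi_D[i,v,u]\}$ is exactly the set $D_{i,v}$ of the modular decomposition of $G$.
   Context: Graphs are finite, simple, undirected, with nonempty vertex set; a graph is a structure $(V,E)$ with $E$ an irreflexive symmetric binary relation. A module of $G=(V,E)$ is a nonempty $M\subseteq V$ such that every $u\in V\setminus M$ is adjacent either to all or to none of the vertices of $M$. For a graph $G$ with $|V|>1$ and $v\in V$, $D_G(v)$ is: the connected component of $G$ containing $v$ if $G$ is disconnected; otherwise the connected component of the complement $\overline{G}$ containing $v$ if $\overline{G}$ is disconnected; otherwise (both $G,\overline{G}$ connected, in which case the maximal proper modules of $G$ partition $V$) the maximal proper module of $G$ containing $v$. If $|V|=1$, $D_G(v)=\{v\}$. With $n=|V|$, the modular decomposition of $G$ is the family $D_{i,v}$ ($i\in[0,n]$, $v\in V$) with $D_{0,v}=V$ and $D_{i+1,v}=D_{G[D_{i,v}]}(v)$, where $G[W]$ is the induced subgraph. Symmetric transitive closure logic with counting $\mathrm{STC{+}C}$ is the two-sorted logic in which a structure $A$ is augmented with a number sort $N(A)=[0,|U(A)|]$ (with its natural order), having structure variables and number variables, obtained from first-order logic by adding the atomic formulas $p\le q$ for number variables, counting formulas $\#\bar u\,\psi=\bar p$ (true iff the number of tuples $\bar u$ satisfying $\psi$ equals $\sum_j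 p_j(|U(A)|+1)^{j-1}$), and the symmetric transitive closure operator $[\mathrm{stc}_{\bar u,\bar v}\psi](\bar u',\bar v')$ (true iff $(\bar u',\bar v')$ lies in the symmetric transitive closure of the relation defined by $\psi$). *)

(* Defs.v *)
From mathcomp Require Import all_boot.
Set Implicit Arguments. Unset Strict Implicit. Unset Printing Implicit Defensive.

(* Graphs: a finite type V (nonempty) with an irreflexive symmetric     *)

Section ModDec.
Variables (V : finType) (E : rel V).

Definition restr (W : {set V}) : rel V := fun x y => [&& x \in W, y \in W & E x y].

Definition comp (W : {set V}) (v : V) : {set V} :=
  [set u in W | connect (restr W) v u].

Definition disconnected (W : {set V}) : bool :=
  [exists x in W, exists y in W, ~~ connect (restr W) x y].

Definition is_module (W M : {set V}) : bool :=
  [&& M != set0, M \subset W &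
      [forall u in W :\: M, [forall m in M, E u m] || [forall m in M, ~~ E u m]]].

Definition maxpropmod (W M : {set V}) : bool :=
  [&& is_module W M, M != W &
      [forall M' : {set V}, [&& is_module W M', M' != W & M \subset M'] ==> (M' == M)]].

End ModDec.

Definition compl (V : finType) (E : rel V) : rel V := fun x y => (x != y) && ~~ E x y.

Definition Dstep (V : finType) (E : rel V) (W : {set V}) (v : V) : {set V} :=
  if #|W| <= 1 then [set v]
  else if disconnected E W then comp E W v
  else if disconnected (compl E) W then comp (compl E) W v
  else odflt W [pick M | maxpropmod E W M && (v \in M)].

Definition Dmod (V : finType) (E : rel V) (i : nat) (v : V) : {set V} :=
  iter i (fun W => Dstep E W v) setT.

(* variables: inl x = structure variable x, inr p = number variable p *)
Definition var := (nat + nat)%type.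

Inductive formula : Type :=
  | FEq   of nat & nat                 (* x = y, structure variables *)
  | FEdge of nat & nat
  | FLe   of nat & nat                 (* p <= q, number variables *)
  | FNot  of formula
  | FAnd  of formula & formula
  | FExS  of nat & formula
  | FExN  of nat & formula
  | FCount of seq var & formula & seq nat
      (* FCount us psi ps :  # us psi = ps *)
  | FStc of seq var & seq var & formula & seq var & seq var.
      (* FStc us vs psi us' vs' :  [stc_{us,vs} psi](us', vs') *)

Fixpoint fv (f : formula) : seq var :=
  match f with
  | FEq x y | FEdge x y => [:: inl x; inl y]
  | FLe p q => [:: inr p; inr q]
  | FNot g => fv g
  | FAnd g h => fv g ++ fv h
  | FExS x g => [seq w <- fv g | w != inl x]
  | FExN p g => [seq w <- fv g | w != inr p]
  | FCount us g ps => [seq w <- fv g | w \notin us] ++ map inr ps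
  | FStc us vs g us' vs' => [seq w <- fv g | w \notin us ++ vs] ++ us' ++ vs'
  end.

Section Semantics.
Variables (V : finType) (E : rel V).

(* the number sort N(G) = [0, |V|] *)
Definition num := 'I_(#|V|).+1.
Definition dval := (V + num)%type.

Definition upd {T : Type} (f : nat -> T) (x : nat) (a : T) : nat -> T :=
  fun y => if y == x then a else f y.

Definition sortmatch (u : var) (a : dval) : bool :=
  match u, a with inl _, inl _ => true | inr _, inr _ => true | _, _ => false end.

Definition wellsorted (us : seq var) (t : seq dval) : bool := all2 sortmatch us t.

Definition assign1 (u : var) (a : dval) (sa : nat -> V) (na : nat -> num)
  : (nat -> V) * (nat -> num) :=
  match u, a with
  | inl x, inl v => (upd sa x v, na)
  | inr p, inr k => (sa, upd na p k)
  | _, _ => (sa, na)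
  end.

Fixpoint assign (us : seq var) (t : seq dval) (sa : nat -> V) (na : nat -> num)
  : (nat -> V) * (nat -> num) :=
  match us, t with
  | u :: us', a :: t' => let st := assign1 u a sa na in assign us' t' st.1 st.2
  | _, _ => (sa, na)
  end.

Definition vals (us : seq var) (sa : nat -> V) (na : nat -> num) : seq dval :=
  map (fun u => match u with inl x => inl (sa x) | inr p => inr (na p) end) us.

(* relational symmetric transitive closure (paths of length >= 1 in R u R^-1) *)
Definition stc_rel (T : finType) (R : rel T) (a b : T) : bool :=
  [exists c, (R a c || R c a) && connect (fun x y => R x y || R y x) c b].

Fixpoint eval (f : formula) (sa : nat -> V) (na : nat -> num) : bool :=
  match f with
  | FEq x y => sa x == sa y
  | FEdge x y => E (sa x) (sa y)
  | FLe p q => (na p <= na q)%N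
  | FNot g => ~~ eval g sa na
  | FAnd g h => eval g sa na && eval h sa na
  | FExS x g => [exists a : V, eval g (upd sa x a) na]
  | FExN p g => [exists k : num, eval g sa (upd na p k)]
  | FCount us g ps =>
      #|[pred t : (size us).-tuple dval |
          wellsorted us t && eval g (assign us t sa na).1 (assign us t sa na).2]|
      == \sum_(j < size ps) (na (nth 0 ps j) : nat) * (#|V|).+1 ^ j
  | FStc us vs g us' vs' =>
      let R : rel ((size us).-tuple dval) := fun a b =>
        [&& wellsorted us a, wellsorted vs b &
            let s1 := assign us a sa na in
            let s2 := assign vs b s1.1 s1.2 in eval g s2.1 s2.2] in
      [exists a : (size us).-tuple dval, exists b : (size us).-tuple dval,
         [&& val a == vals us' sa na, val b == vals vs' sa na & stc_rel R a b]]
  end.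

End Semantics.

(* Main.v *)
Require Import Defs.
From mathcomp Require Import all_boot zify.
Set Implicit Arguments. Unset Strict Implicit. Unset Printing Implicit Defensive.

Notation dcomp := Defs.comp.
Section Graph.
Variables (V : finType).

Definition modW (e : rel V) (W T : {set V}) :=
  T \subset W /\ forall u m m', u \in W -> u \notin T -> m \in T -> m' \in T -> e u m = e u m'.

Lemma modW_compl (E : rel V) (W T : {set V}) : modW (compl E) W T <-> modW E W T.
Proof.
have key : forall u m m', u \notin T -> m \in T -> m' \in T ->
  (compl E u m = compl E u m') <-> (E u m = E u m').
  move=> u m m' uT mT m'T; rewrite /compl.
  have -> : (u != m) by apply: contraNneq uT => ->.
  have -> : (u != m') by apply: contraNneq uT => ->.
  by split => [/= /negb_inj|/= ->].
split=> [[S H]|[S H]]; split=> // u m m' uW uT mT m'T; apply/(key u m m') => //; exact: H.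
Qed.

Lemma is_moduleP (E : rel V) (W M : {set V}) : is_module E W M <-> M != set0 /\ modW E W M.
Proof.
split.
  case/and3P => Hne Hsub /forall_inP H; split=> //; split=> // u m m' uW uT mT m'T.
  have := H u; rewrite inE uT uW => /(_ isT) /orP [/forall_inP A | /forall_inP A].
    by rewrite !A.
  by rewrite (negbTE (A _ mT)) (negbTE (A _ m'T)).
case=> Hne [Hsub H]; apply/and3P; split=> //.
apply/forall_inP => u /setDP [uW uT]; case/set0Pn: Hne => m0 m0T.
case: (boolP (E u m0)) => Eu0; apply/orP; [left|right]; apply/forall_inP => m mT.
  by rewrite (H u m m0).
by rewrite (H u m m0).
Qed.

Definition modG (E : rel V) T := modW E setT T.

Lemma modG_W (E : rel V) (W T : {set V}) : modG E T -> T \subset W -> modW E W T.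
Proof. by case=> _ H S; split=> // u m m' _; apply: H. Qed.

Lemma modW_G (E : rel V) (W T : {set V}) : modG E W -> modW E W T -> modG E T.
Proof.
case=> _ HW [S H]; split; first exact: subsetT.
move=> u m m' _ uT mT m'T; case: (boolP (u \in W)) => uW; first exact: H.
by apply: HW => //; apply: (subsetP S).
Qed.

Lemma modW_U (E : rel V) (W T P : {set V}) x : modW E W T -> modW E W P -> x \in T -> x \in P ->
  modW E W (T :|: P).
Proof.
case=> ST HT [SP HP] xT xP; split; first by rewrite subUset ST SP.
move=> u m m' uW; rewrite inE negb_or => /andP [uT uP].
have hm : forall m, m \in T :|: P -> E u m = E u x.
  move=> z; rewrite inE => /orP [zT|zP]; [exact: HT | exact: HP].
by move=> /hm -> /hm ->.
Qed.

Lemma restr_sym (e : rel V) (W : {set V}) : symmetric e -> symmetric (restr e W).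
Proof. by move=> es x y; rewrite /restr es andbCA. Qed.

Lemma comp_sub (e : rel V) (W : {set V}) a : dcomp e W a \subset W.
Proof. by apply/subsetP => x; rewrite inE => /andP []. Qed.

Lemma comp_self (e : rel V) (W : {set V}) a : a \in W -> a \in dcomp e W a.
Proof. by move=> aW; rewrite inE aW connect0. Qed.

Lemma comp_mod (e : rel V) (W : {set V}) a b : symmetric e -> modW e W (dcomp e W a :|: dcomp e W b).
Proof.
move=> es; split; first by rewrite subUset !comp_sub.
have h : forall u m, u \in W -> u \notin dcomp e W a :|: dcomp e W b ->
   m \in dcomp e W a :|: dcomp e W b -> e u m = false.
  move=> u m uW; rewrite !inE !negb_or uW /= => /andP [ua ub] /orP [/andP [mW cm] | /andP [mW cm]];
  apply/negP => eum.
    by move/negP: ua; apply; apply: connect_trans cm (connect1 _); rewrite /restr mW uW es.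
  by move/negP: ub; apply; apply: connect_trans cm (connect1 _); rewrite /restr mW uW es.
by move=> u m m' uW uT mT m'T; rewrite !h.
Qed.

Lemma comp_sub_mod (e : rel V) (W T : {set V}) t0 t : symmetric e -> modW e W T -> t0 \in T ->
  t \in T -> t \notin dcomp e W t0 -> dcomp e W t0 \subset T.
Proof.
move=> es [ST HT] t0T tT tC.
have aux : forall x y, x \in T -> y \notin T -> restr e W x y -> connect (restr e W) t0 x -> False.
  move=> x y xT yT /and3P [xW yW exy] cx.
  have eyt : e y t by rewrite -(HT y x t) // es.
  move/negP: tC; apply; rewrite inE (subsetP ST) //=.
  have r1 : restr e W x y by rewrite /restr xW yW exy.
  have r2 : restr e W y t by rewrite /restr yW (subsetP ST) // eyt.
  exact: connect_trans (connect_trans cx (connect1 r1)) (connect1 r2).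
pose Q := [pred z | (z \in T) || ~~ connect (restr e W) t0 z].
have cl : closed (restr e W) Q.
  move=> x y rxy.
  have rs := restr_sym W es.
  have cxy : connect (restr e W) t0 x = connect (restr e W) t0 y.
    apply/idP/idP => h; apply: connect_trans h (connect1 _) => //; by rewrite rs.
  rewrite !inE -cxy; case: (boolP (connect _ t0 x)) => cx /=; last by rewrite !orbT.
  rewrite !orbF; apply/idP/idP => h.
    by case: (boolP (y \in T)) => // yT; exfalso; exact: (aux x y h yT rxy cx).
  case: (boolP (x \in T)) => // xT; exfalso.
  by apply: (aux y x h xT); [rewrite rs | rewrite -cxy].
apply/subsetP => c; rewrite inE => /andP [cW ctc].
have := closed_connect cl ctc; rewrite !inE t0T ctc /= orbF => <- //.
Qed.

Lemma sep_disc (e : rel V) (W : {set V}) (A : {set V}) a0 b0 : a0 \in W -> b0 \in W -> a0 \in A -> b0 \notin A ->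
  (forall x y, x \in W -> y \in W -> x \in A -> y \notin A -> e x y = false) ->
  symmetric e -> disconnected e W.
Proof.
move=> a0W b0W a0A b0A H es; apply/existsP; exists a0; rewrite a0W /=.
apply/existsP; exists b0; rewrite b0W /=; apply/negP => c.
have cl : closed (restr e W) (mem A).
  move=> x y /and3P [xW yW exy] /=.
  case: (boolP (x \in A)) => xA; case: (boolP (y \in A)) => yA //.
    by rewrite H in exy.
  by rewrite es H in exy.
by have := closed_connect cl c; rewrite /= a0A (negbTE b0A).
Qed.

End Graph.
Section Gallai.
Variables (V : finType) (e : rel V).
Hypothesis es : symmetric e.

Definition gstep (p q : V * V) : bool :=
  [&& e p.1 p.2, e q.1 q.2 &
      ((p.1 == q.1) && (p.2 != q.2) && ~~ e p.2 q.2) || ((p.1 == q.2) && (p.2 == q.1))].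
Definition gsym (p q : V * V) : bool := gstep p q || gstep q p.

Definition Xset (x y : V) : {set V} :=
  [set z | (z == x) || (z == y) || [exists t, connect gsym (x, y) (z, t)]].

Definition modT (T : {set V}) :=
  forall u m m', u \notin T -> m \in T -> m' \in T -> e u m = e u m'.

Lemma gstep_sym p q : gstep p q = gstep q p.
Proof.
case: p q => [a b] [c d]; rewrite /gstep /=.
by rewrite andbCA (eq_sym c a) (eq_sym d b) (es d b) (eq_sym c b) (eq_sym d a) (andbC (b == c)).
Qed.

Lemma gsymE p q : gsym p q = gstep p q.
Proof. by rewrite /gsym gstep_sym orbb. Qed.

Lemma gsym_sym : symmetric gsym.
Proof. by move=> p q; rewrite /gsym orbC. Qed.

Lemma gstep_swap p : e p.1 p.2 -> gsym p (p.2, p.1).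
Proof. by move=> h; rewrite gsymE /gstep /= h es h !eqxx /= orbT. Qed.

Lemma Xset_l x y : x \in Xset x y.
Proof. by rewrite inE eqxx. Qed.
Lemma Xset_r x y : y \in Xset x y.
Proof. by rewrite inE eqxx orbT. Qed.

Lemma Xset_min x y (T : {set V}) : x \in T -> y \in T -> modT T -> Xset x y \subset T.
Proof.
move=> xT yT HT.
pose Q := [pred p : V * V | (p.1 \in T) && (p.2 \in T)].
have one : forall p q, gstep p q -> p \in Q -> q \in Q.
  move=> [a b] [c d]; rewrite /gstep /= !inE => /and3P [eab ecd H] /andP [aT bT].
  case/orP: H => /andP [].
    move=> /andP [/eqP eac bd] nebd; subst c; rewrite aT /=.
    case: (boolP (d \in T)) => // dT.
    have := HT d a b dT aT bT; rewrite (es d a) (es d b) ecd => h.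
    by rewrite -h in nebd.
  by move=> /eqP ? /eqP ?; subst; rewrite aT bT.
have cl : closed gsym Q.
  move=> p q; rewrite gsymE => h; apply/idP/idP; first exact: one h.
  by apply: one; rewrite gstep_sym.
apply/subsetP => z; rewrite inE => /orP [/orP [/eqP -> //| /eqP -> //] |].
case/existsP => t c.
by have := closed_connect cl c; rewrite !inE /= xT yT /= => /esym /andP [].
Qed.

Lemma first_step (T : finType) (r : rel T) a b :
  connect r a b -> a = b \/ exists c, r a c && connect r c b.
Proof.
case/connectP => [[|c p]] /= => [_ -> | /andP [rac pc] ->]; first by left.
by right; exists c; rewrite rac; apply/connectP; exists p.
Qed.

Lemma Xset_mod x y : e x y -> modT (Xset x y).
Proof.
move=> exy u m m' uX.
pose K p := connect gsym (x, y) p.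
have Kin : forall p, K p -> p.1 \in Xset x y.
  by move=> [a b] Kp; rewrite inE; apply/orP; right; apply/existsP; exists b.
have clE : closed gsym [pred p : V * V | e p.1 p.2].
  by move=> p q; rewrite gsymE => /and3P [h1 h2 _]; rewrite !inE h1 h2.
have Ke : forall p, K p -> e p.1 p.2.
  by move=> p Kp; have := closed_connect clE Kp; rewrite !inE /= exy => <-.
have Kswap : forall a b, K (a, b) -> K (b, a).
  move=> a b Kp; exact: (connect_trans Kp (connect1 (gstep_swap (Ke _ Kp)))).
have Kstep : forall p q, K p -> gstep p q -> K q.
  by move=> p q Kp h; apply: connect_trans Kp (connect1 _); rewrite gsymE.
have bad : forall a b, K (a, b) -> e u a -> ~~ e u b -> False.
  move=> a b Kab h1 h2.
  have bX : b \in Xset x y by apply: (Kin (b, a)); apply: Kswap.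
  have Kau : K (a, u).
    apply: (Kstep (a, b)); first exact: Kab; rewrite /gstep /= (Ke _ Kab) es h1 eqxx /= es h2 andbT.
    by apply/orP; left; apply: contraNneq uX => <-.
  by move/negP: uX; apply; apply: (Kin (u, a)); apply: Kswap.
have uni : forall p, K p -> e u p.1 = e u p.2.
  move=> [a b] Kp /=; case h1 : (e u a); case h2 : (e u b) => //.
    by exfalso; apply: (bad a b Kp); rewrite ?h1 ?h2.
  by exfalso; apply: (bad b a (Kswap _ _ Kp)); rewrite ?h1 ?h2.
pose Q := [pred p : V * V | K p ==> (e u p.1 == e u x)].
have cl : closed gsym Q.
  move=> p q pq.
  have KpKq : K p = K q.
    apply/idP/idP => h; apply: connect_trans h (connect1 _) => //; by rewrite gsym_sym.
  rewrite !inE -KpKq; case: (boolP (K p)) => //= Kp.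
  move: pq; rewrite gsymE /gstep => /and3P [_ _ /orP [/andP [/andP [/eqP -> _] _]|/andP [_ /eqP <-]]] //.
  by rewrite (uni _ Kp).
have Kx : forall p, K p -> e u p.1 = e u x.
  move=> p Kp; have := closed_connect cl Kp; rewrite !inE /= eqxx implybT => /esym.
  by rewrite Kp /= => /eqP.
have hm : forall z, z \in Xset x y -> e u z = e u x.
  move=> z; rewrite inE => /orP [/orP [/eqP -> // | /eqP ->] | /existsP [t Kzt]].
    by have := uni (x, y) (connect0 _ _).
  exact: (Kx (z, t)).
by move=> /hm -> /hm ->.
Qed.

End Gallai.
Section Dec.
Variables (V : finType) (E : rel V).
Hypotheses (Eirr : irreflexive E) (Esym : symmetric E).

Lemma compl_sym : symmetric (compl E).
Proof. by move=> x y; rewrite /compl eq_sym Esym. Qed.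

Lemma modT_E T : modT E T <-> modG E T.
Proof.
split; first by move=> H; split; [exact: subsetT | move=> u m m' _; apply: H].
by case=> _ H u m m' uT; apply: H.
Qed.

Lemma modT_compl T : modT (compl E) T <-> modT E T.
Proof.
have key : forall u m m', u \notin T -> m \in T -> m' \in T ->
  (compl E u m = compl E u m') <-> (E u m = E u m').
  move=> u m m' uT mT m'T; rewrite /compl.
  have -> : (u != m) by apply: contraNneq uT => ->.
  have -> : (u != m') by apply: contraNneq uT => ->.
  by split => [/= /negb_inj|/= ->].
by split=> H u m m' uT mT m'T; apply/(key u m m') => //; apply: H.
Qed.

Definition Mc (x y : V) : {set V} :=
  if x == y then [set x] else if E x y then Xset E x y else Xset (compl E) x y.

Lemma Mc_l x y : x \in Mc x y.
Proof. by rewrite /Mc; case: eqP => _; [rewrite set11 | case: ifP => _; apply: Xset_l]. Qed.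

Lemma Mc_r x y : y \in Mc x y.
Proof.
rewrite /Mc; case: eqP => [->|_]; first by rewrite set11.
by case: ifP => _; apply: Xset_r.
Qed.

Lemma Mc_mod x y : modG E (Mc x y).
Proof.
apply/modT_E; rewrite /Mc; case: eqP => [_|nxy].
  by move=> u m m' _; rewrite !inE => /eqP -> /eqP ->.
case: ifP => exy; first exact: Xset_mod.
apply/modT_compl; apply: Xset_mod; first exact: compl_sym.
by rewrite /compl exy andbT; apply/eqP.
Qed.

Lemma Mc_min x y T : modG E T -> x \in T -> y \in T -> Mc x y \subset T.
Proof.
move=> /modT_E HT xT yT; rewrite /Mc; case: eqP => _; first by rewrite sub1set.
case: ifP => _; first exact: (Xset_min Esym).
by apply: (Xset_min compl_sym) => //; apply/modT_compl.
Qed.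

Section Step.
Variables (W : {set V}) (v : V).
Hypotheses (vW : v \in W) (WG : modG E W) (W2 : 1 < #|W|).

Definition good (W' : {set V}) :=
  [/\ v \in W', W' \subset W, W' != W, modG E W' &
   (forall T, modG E T -> v \in T -> T \subset W -> ~~ (T \subset W') -> W' \subset T) /\
   (forall w y, w \in W -> w \notin W' -> y \in W -> y \notin W' ->
      (w \notin Mc v y) || (y \in Mc v w))].

Lemma disc_good (e : rel V) : symmetric e -> (forall T, modW e W T <-> modW E W T) ->
  disconnected e W -> good (dcomp e W v).
Proof.
move=> es hm dis.
have csym := sym_connect_sym (restr_sym W es).
have cmod : forall a b, modG E (dcomp e W a :|: dcomp e W b).
  by move=> a b; apply: (modW_G WG); apply/hm; apply: comp_mod.
split.
- exact: comp_self.
- exact: comp_sub.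
- apply/negP => /eqP hC; case/existsP: dis => x /andP [xW /existsP [y /andP [yW]]].
  move: xW yW; rewrite -{1 2}hC !inE => /andP [_ cx] /andP [_ cy].
  by apply/negP/negPn; apply: connect_trans cy; rewrite csym.
- by have := cmod v v; rewrite setUid.
split.
- move=> T TG vT TW /subsetPn [t tT tC].
  apply: (comp_sub_mod es _ vT tT tC); apply/hm; exact: modG_W.
- move=> w y wW wC yW yC.
  case: (boolP (connect (restr e W) w y)) => cwy.
    apply/orP; right.
    have McW : Mc v w \subset W by apply: Mc_min.
    have vC : v \notin dcomp e W w.
      apply: contra wC; rewrite !inE vW wW /= => h; by rewrite csym.
    have := comp_sub_mod es ((hm _).2 (modG_W (Mc_mod v w) McW)) (Mc_r v w) (Mc_l v w) vC.
    by move/subsetP; apply; rewrite inE yW.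
  apply/orP; left; apply: contraNN wC => wM.
  have vU : v \in dcomp e W v :|: dcomp e W y by rewrite inE comp_self.
  have yU : y \in dcomp e W v :|: dcomp e W y by rewrite inE (comp_self _ yW) orbT.
  have := subsetP (Mc_min (cmod v y) vU yU) w wM.
  rewrite !inE wW /= => /orP [//|cyw].
  by rewrite csym cyw in cwy.
Qed.

Lemma prime_good P : ~~ disconnected E W -> ~~ disconnected (compl E) W ->
  maxpropmod E W P -> v \in P -> good P.
Proof.
move=> nd ncd /and3P [/is_moduleP [Pne PW] PneW /forallP Pmax] vP.
have PG := modW_G WG PW.
have PsubW : P \subset W by case: PW.
have LA : forall T, modG E T -> v \in T -> T \subset W -> ~~ (T \subset P) -> P \subset T.
  move=> T TG vT TW TnP.
  have TWm := modG_W TG TW.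
  have UW := modW_U TWm PW vT vP.
  have UeqW : T :|: P = W.
    apply/eqP; apply: contraNT TnP => UneW.
    have := Pmax (T :|: P); rewrite subsetUr UneW andbT.
    have -> : is_module E W (T :|: P).
      apply/is_moduleP; split=> //; apply/set0Pn; exists v; by rewrite inE vT.
    by move=> /implyP /(_ isT) /eqP <-; rewrite subsetUl.
  apply: contraNT nd => PnT.
  case/subsetPn: TnP => a0 a0T a0P; case/subsetPn: PnT => b0 b0P b0T.
  have a0W : a0 \in W by rewrite -UeqW inE a0T.
  have b0W : b0 \in W by apply: (subsetP PsubW).
  have key : forall x y, x \in W -> x \notin P -> y \in P -> E x y = E b0 a0.
    move=> x y xW xP yP.
    have xT : x \in T by move: xW; rewrite -UeqW inE (negbTE xP) orbF.
    case: PW => _ HP; rewrite (HP x y b0) // Esym.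
    by case: TWm => _ HT; apply: HT.
  have hA : forall y, y \in W -> y \notin W :\: P -> y \in P.
    by move=> y yW; rewrite inE yW andbT negbK.
  case c : (E b0 a0).
    exfalso; move/negP: ncd; apply.
    apply: (sep_disc (A := W :\: P) a0W b0W); rewrite ?inE ?a0P ?a0W ?b0P //.
      move=> x y xW yW xA yA; rewrite /compl.
      move: xA; rewrite inE xW andbT => xP.
      by rewrite (key x y) ?c ?andbF // hA.
    exact: compl_sym.
  apply: (sep_disc (A := W :\: P) a0W b0W); rewrite ?inE ?a0P ?a0W ?b0P //.
  move=> x y xW yW xA yA.
  move: xA; rewrite inE xW andbT => xP.
  by rewrite (key x y) // hA.
split=> //; split=> //.
move=> w y wW wP yW yP; apply/orP; right.
have McW : Mc v w \subset W by apply: Mc_min.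
have PM : P \subset Mc v w.
  apply: LA => //; [exact: Mc_mod | exact: Mc_l | by apply/subsetPn; exists w; rewrite ?Mc_r].
have MeqW : Mc v w = W.
  apply/eqP; apply: contraNT wP => MneW.
  have := Pmax (Mc v w); rewrite PM MneW andbT.
  have -> : is_module E W (Mc v w).
    apply/is_moduleP; split; first by apply/set0Pn; exists v; apply: Mc_l.
    exact: modG_W (Mc_mod v w) McW.
  by move=> /implyP /(_ isT) /eqP <-; apply: Mc_r.
by rewrite MeqW.
Qed.

Lemma exists_maxpropmod : exists P, maxpropmod E W P && (v \in P).
Proof.
pose Pm := fun M : {set V} => [&& is_module E W M, M != W & v \in M].
have P1 : Pm [set v].
  rewrite /Pm set11 andbT; apply/andP; split.
    apply/is_moduleP; split; first by apply/set0Pn; exists v; rewrite set11.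
    split; first by rewrite sub1set.
    by move=> u m m' _ _; rewrite !inE => /eqP -> /eqP ->.
  by apply: contraTneq W2 => <-; rewrite cards1.
case: (arg_maxnP (fun M : {set V} => #|M|) P1) => M /and3P [HM MW vM] Mmax.
exists M; rewrite vM andbT; apply/and3P; split=> //.
apply/forallP => M'; apply/implyP => /and3P [HM' M'W MM'].
have := Mmax M'; rewrite /Pm HM' M'W (subsetP MM' v vM) => /(_ isT) le.
by rewrite eq_sym eqEcard MM' /=; exact: le.
Qed.

Lemma Dstep_good : good (Dstep E W v).
Proof.
rewrite /Dstep leqNgt W2 /=.
case: ifP => [d|nd]; first by apply: disc_good => //; split.
case: ifP => [d|ncd].
  apply: disc_good => //; first exact: compl_sym.
  by move=> T; split => /modW_compl.
case: pickP => [P /andP [HP vP]|none].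
  by apply: prime_good => //; rewrite ?nd ?ncd.
by exfalso; case: exists_maxpropmod => P; rewrite none.
Qed.

End Step.
End Dec.
Lemma transition (P : nat -> bool) n : P 0 -> ~~ P n -> exists l, l < n /\ P l /\ ~~ P l.+1.
Proof.
elim: n => [-> //|n IH] P0 Pn.
case: (boolP (P n)) => Pn'; first by exists n.
by have [l [ln [Pl Pl1]]] := IH P0 Pn'; exists l; split=> //; apply: ltnW.
Qed.

Section Main.
Variables (V : finType) (E : rel V).
Hypotheses (Eirr : irreflexive E) (Esym : symmetric E).
Variable v : V.

Notation D l := (Dmod E l v).
Notation MC := (Mc E).

Lemma DS l : D l.+1 = Dstep E (D l) v.
Proof. by rewrite /Dmod iterS. Qed.

Lemma modG1 : modG E [set v].
Proof. by split; [exact: subsetT | move=> u m m' _ _; rewrite !inE => /eqP -> /eqP ->]. Qed.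

Lemma D_inv l : v \in D l /\ modG E (D l).
Proof.
elim: l => [|l [vD DG]].
  by split; [rewrite /Dmod /= inE | split; [exact: subsetT | move=> u m m' _; rewrite inE]].
rewrite DS /Dstep; case: ifP => [_|/negbT]; first by rewrite set11; split=> //; exact: modG1.
rewrite -ltnNge => W2.
have := Dstep_good Esym vD DG W2; rewrite /Dstep leqNgt W2 /=.
by case=> [? _ _ ? _].
Qed.

Lemma Dv l : v \in D l. Proof. by case: (D_inv l). Qed.
Lemma DG l : modG E (D l). Proof. by case: (D_inv l). Qed.

Lemma D_good l : 1 < #|D l| -> good E (D l) v (D l.+1).
Proof. by move=> W2; rewrite DS; apply: Dstep_good => //; [exact: Dv | exact: DG]. Qed.

Lemma small_set (A : {set V}) : v \in A -> #|A| <= 1 -> A = [set v].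
Proof.
move=> vA c; apply/eqP; rewrite eq_sym eqEcard sub1set vA cards1 /=; exact: c.
Qed.

Lemma D_small l : #|D l| <= 1 -> D l.+1 = D l.
Proof.
move=> c; rewrite DS /Dstep c; rewrite (small_set (Dv l) c) //.
Qed.

Lemma D_sub l : D l.+1 \subset D l.
Proof.
case: (leqP #|D l| 1) => c; first by rewrite D_small.
by case: (D_good c).
Qed.

Lemma D_strict l : 1 < #|D l| -> #|D l.+1| < #|D l|.
Proof.
move=> c; case: (D_good c) => _ sub ne _ _.
by apply: proper_card; rewrite properEneq ne sub.
Qed.

Lemma D_mono l l' : l <= l' -> D l' \subset D l.
Proof.
elim: l' => [|l' IH]; first by rewrite leqn0 => /eqP ->.
rewrite leq_eqVlt => /orP [/eqP -> //| ll'].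
by apply: subset_trans (D_sub l') (IH ll').
Qed.

Lemma D_bound l : (#|D l| <= 1) || (#|D l| + l <= #|V|).
Proof.
elim: l => [|l IH]; first by rewrite /Dmod /= cardsT addn0 leqnn orbT.
case: (leqP #|D l| 1) => c; first by rewrite D_small // c.
move: IH; rewrite leqNgt c /= => IH.
have := D_strict c; rewrite addnS => lt; apply/orP; right.
by apply: leq_trans IH; rewrite ltn_add2r.
Qed.

Lemma D_end : D #|V| = [set v].
Proof.
apply: small_set; first exact: Dv.
have := D_bound #|V|; case/orP => // h; lia.
Qed.

Definition Sset (w : V) : {set V} := [set y | (w \notin MC v y) || (y \in MC v w)].

Lemma two_card (A : {set V}) a b : a \in A -> b \in A -> a != b -> 1 < #|A|.
Proof.
move=> aA bA ab; have := subset_leq_card (_ : [set a; b] \subset A).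
rewrite cards2 ab; apply; by rewrite subUset !sub1set aA bA.
Qed.

Lemma Sset_D l w : w \in D l -> w \notin D l.+1 -> Sset w = D l.
Proof.
move=> wl wl1.
have wv : w != v by apply: contraNneq wl1 => ->; exact: Dv.
have W2 : 1 < #|D l| by apply: (two_card wl (Dv l)).
case: (D_good W2) => _ _ _ G1 [LA LB].
apply/setP => y; rewrite inE.
case: (boolP (y \in D l)) => yl.
  case: (boolP (y \in D l.+1)) => yl1.
    apply/orP; left; apply: contra wl1 => wM.
    by apply: (subsetP (Mc_min Esym G1 (Dv _) yl1)).
  exact: LB.
apply/negbTE; rewrite negb_or negbK.
have [l' [l'l [yl' yl'1]]] := transition (P := fun k => y \in D k) (in_setT y : y \in D 0) yl.
have yv : y != v by apply: contraNneq yl => ->; exact: Dv.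
have W2' : 1 < #|D l'| by apply: (two_card yl' (Dv l')).
case: (D_good W2') => _ _ _ _ [LA' _].
have := LA' (MC v y) (Mc_mod Esym v y) (Mc_l E v y) (Mc_min Esym (DG l') (Dv _) yl').
have yM : ~~ (MC v y \subset D l'.+1) by apply/subsetPn; exists y => //; exact: Mc_r.
move=> /(_ yM) sub.
apply/andP; split.
  by apply: (subsetP sub); apply: (subsetP (D_mono l'l)).
by apply: contra yl => yM'; exact: (subsetP (Mc_min Esym (DG l) (Dv _) wl)) _ yM'.
Qed.

Lemma Sset_v : Sset v = [set v].
Proof.
apply/setP => y; rewrite !inE Mc_l /= /Mc eqxx inE.
by apply/eqP/eqP.
Qed.

Lemma Sset_ex w : exists l, Sset w = D l.
Proof.
case: (eqVneq w v) => [->|wv]; first by exists #|V|; rewrite Sset_v D_end.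
have wn : w \notin D #|V| by rewrite D_end inE.
have [l [_ [wl wl1]]] := transition (P := fun k => w \in D k) (in_setT w : w \in D 0) wn.
by exists l; apply: Sset_D.
Qed.

Lemma D_ex l : exists w, Sset w = D l.
Proof.
case: (leqP #|D l| 1) => c.
  by exists v; rewrite Sset_v (small_set (Dv l) c).
case: (D_good c) => _ sub ne _ _.
have : ~~ (D l \subset D l.+1) by apply: contra ne => h; rewrite eqEsubset sub h.
by case/subsetPn => w wl wl1; exists w; apply: Sset_D.
Qed.

Notation f l := #|D l|.

Lemma fmono l l' : l <= l' -> f l' <= f l.
Proof. by move=> h; apply: subset_leq_card; apply: D_mono. Qed.

Lemma fstrict l l' : l < l' -> 1 < f l' -> f l' < f l.
Proof.
elim: l' => [//|l' IH] ll' c.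
have c' : 1 < f l' by apply: leq_trans c (fmono (leqnSn _)).
have s := D_strict c'.
move: ll'; rewrite ltnS leq_eqVlt => /orP [/eqP -> //| ll'].
by apply: ltn_trans s (IH ll' c').
Qed.

Definition cnt (w : V) := #|[pred q : num V | [exists w', #|Sset w'| == q] && (#|Sset w| < q)]|.

Lemma fbound l : f l < #|V|.+1.
Proof. by rewrite ltnS max_card. Qed.

Lemma main_char (i : nat) u :
  (u \in D i) = (v == u) || [exists w, (u \in Sset w) && (i <= cnt w)].
Proof.
apply/idP/idP.
  move=> ui; case: (eqVneq v u) => //= vu.
  have c : 1 < f i by apply: (two_card (Dv i) ui vu).
  have [w Sw] := D_ex i; apply/existsP; exists w; rewrite Sw ui /=.
  pose g := fun j : 'I_i => (inord (f j) : num V).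
  have ginj : injective g.
    move=> j j' /(congr1 val); rewrite /= !inordK ?fbound // => h; apply/val_inj => /=.
    case: (ltngtP j j') => // jj'.
      have := fstrict jj' (leq_trans c (fmono (ltnW (ltn_ord j')))); by rewrite h ltnn.
    have := fstrict jj' (leq_trans c (fmono (ltnW (ltn_ord j)))); by rewrite h ltnn.
  have := card_imset [set: 'I_i] ginj; rewrite cardsT card_ord => <-.
  apply: subset_leq_card; apply/subsetP => q /imsetP [j _ ->]; rewrite inE.
  have [w' Sw'] := D_ex j.
  apply/andP; split; first by apply/existsP; exists w'; rewrite Sw' /g; apply/eqP/esym/inordK/fbound.
  by rewrite /g inordK ?fbound // Sw fstrict.
case/orP => [/eqP <-|]; first exact: Dv.
case/existsP => w /andP [uS ic].
have [l Sl] := Sset_ex w.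
case: (leqP i l) => il; first by apply: (subsetP (D_mono il)); rewrite -Sl.
exfalso; move: ic; apply/negP; rewrite -ltnNge; apply: leq_ltn_trans il.
pose g := fun j : 'I_l => (inord (f j) : num V).
apply: leq_trans (_ : #|g @: [set: 'I_l]| <= l); last first.
  by have := leq_imset_card g [set: 'I_l]; rewrite cardsT card_ord.
apply: subset_leq_card; apply/subsetP => q; rewrite inE => /andP [/existsP [w' /eqP Sw'] lt].
have [j Sj] := Sset_ex w'.
move: lt; rewrite -Sw' Sj Sl => lt.
have jl : j < l.
  by rewrite ltnNge; apply/negP => lj; have := fmono lj; rewrite leqNgt lt.
apply/imsetP; exists (Ordinal jl) => //; apply/val_inj; rewrite /g /= inordK ?fbound //.
by rewrite -Sw' Sj.
Qed.

End Main.
Definition For (f g : formula) := FNot (FAnd (FNot f) (FNot g)).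
Definition Fcedge a b := FAnd (FNot (FEq a b)) (FNot (FEdge a b)).
Definition Gstep (ed : nat -> nat -> formula) :=
  FAnd (ed 100 101) (FAnd (ed 102 103)
    (For (FAnd (FEq 100 102) (FAnd (FNot (FEq 101 103)) (FNot (ed 101 103))))
         (FAnd (FEq 100 103) (FEq 101 102)))).
Definition Cls ed x y z :=
  For (FEq z x) (For (FEq z y) (FExS 104 (FStc [:: inl 100; inl 101] [:: inl 102; inl 103]
      (Gstep ed) [:: inl x; inl y] [:: inl z; inl 104]))).

Lemma stc_connect (T : finType) (r : rel T) a b :
  stc_rel r a b -> connect (fun x y => r x y || r y x) a b.
Proof. by case/existsP => c /andP [h1 h2]; apply: connect_trans (@connect1 _ (fun x y => r x y || r y x) _ _ h1) h2. Qed.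

Lemma connect_stc (T : finType) (r : rel T) a b :
  connect (fun x y => r x y || r y x) a b -> a = b \/ stc_rel r a b.
Proof.
by move/first_step => [->|[c h]]; [left | right; apply/existsP; exists c].
Qed.

Lemma stc_transfer (T1 T2 : finType) (h : T1 -> T2) (r1 : rel T1) (r2 : rel T2) :
  injective h -> (forall a b, r2 a b -> (exists p, a = h p) /\ (exists q, b = h q)) ->
  (forall p q, r2 (h p) (h q) = r1 p q) ->
  forall p q, stc_rel r2 (h p) (h q) = stc_rel r1 p q.
Proof.
move=> hinj himg hr.
pose s1 := fun x y => r1 x y || r1 y x.
pose s2 := fun x y => r2 x y || r2 y x.
have img : forall a b, s2 a b -> (exists p, a = h p) /\ (exists q, b = h q).
  move=> a b /orP [/himg //|/himg [? ?]]; by split.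
have hs : forall p q, s2 (h p) (h q) = s1 p q by move=> p q; rewrite /s1 /s2 !hr.
have s1sym : connect_sym s1 by apply: sym_connect_sym => x y; rewrite /s1 orbC.
have s2sym : connect_sym s2 by apply: sym_connect_sym => x y; rewrite /s2 orbC.
have fwd : forall p q, connect s1 p q -> connect s2 (h p) (h q).
  move=> p q c.
  pose Q := [pred x | connect s2 (h p) (h x)].
  have cl : closed s1 Q.
    move=> x y sxy; rewrite !inE; apply/idP/idP => cx.
      by apply: connect_trans cx (connect1 _); rewrite hs.
    by apply: connect_trans cx (connect1 _); rewrite hs /s1 orbC.
  by have := closed_connect cl c; rewrite !inE connect0 => <-.
have bwd : forall p q, connect s2 (h p) (h q) -> connect s1 p q.
  move=> p q c.
  pose Q := [pred a | [exists x, (a == h x) && connect s1 p x]].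
  have cl : closed s2 Q.
    move=> a b sab; have [[x ex] [y ey]] := img _ _ sab; subst a b.
    move: sab; rewrite hs => sxy.
    have cxy : forall z, connect s1 z x = connect s1 z y.
      move=> z; apply/idP/idP => cz; apply: connect_trans cz (connect1 _) => //.
      by move: sxy; rewrite /s1 orbC.
    rewrite !inE; apply/existsP/existsP => [[z /andP [/eqP /hinj <- c']]|[z /andP [/eqP /hinj <- c']]].
      by exists y; rewrite eqxx -cxy.
    by exists x; rewrite eqxx cxy.
  have := closed_connect cl c; rewrite !inE.
  have -> : [exists x, (h p == h x) && connect s1 p x] by apply/existsP; exists p; rewrite eqxx connect0.
  by move=> /esym /existsP [z /andP [/eqP /hinj <-]].
move=> p q; apply/existsP/existsP.
  case=> c /andP [spc cq].
  have [_ [c' ec]] := img _ _ spc; subst c.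
  by exists c'; rewrite -!hr spc /=; apply: bwd.
case=> c /andP [spc cq]; exists (h c).
by rewrite !hr spc /=; apply: fwd.
Qed.

Section Sem.
Variables (V : finType) (E : rel V).

Lemma eval_For f g sa na : eval E (For f g) sa na = eval E f sa na || eval E g sa na.
Proof. by rewrite /= negb_and !negbK. Qed.

Lemma eval_FStc us vs g us' vs' sa na : eval E (FStc us vs g us' vs') sa na =
  [exists a : (size us).-tuple (dval V), exists b : (size us).-tuple (dval V),
    [&& val a == vals us' sa na, val b == vals vs' sa na &
      stc_rel (fun a b : (size us).-tuple (dval V) => [&& wellsorted us a, wellsorted vs b &
        eval E g (assign vs b (assign us a sa na).1 (assign us a sa na).2).1
                 (assign vs b (assign us a sa na).1 (assign us a sa na).2).2]) a b]].
Proof. by []. Qed.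

Definition h2 (p : V * V) : 2.-tuple (dval V) := [tuple inl p.1; inl p.2].

Lemma h2_inj : injective h2.
Proof. by move=> [a b] [c d] /(congr1 val) [-> ->]. Qed.

Lemma ws2 A B (a : 2.-tuple (dval V)) : wellsorted [:: inl A; inl B] a -> exists p, a = h2 p.
Proof.
case: a => [[|[a1|?] [|[a2|?] []]] //= Hs] _.
by exists (a1, a2); apply/val_inj.
Qed.

Lemma stc_key (R : rel (2.-tuple (dval V))) (r : rel (V * V)) p1 p2 q1 q2 :
  (forall a b, R a b -> (exists p, a = h2 p) /\ (exists q, b = h2 q)) ->
  (forall p q, R (h2 p) (h2 q) = r p q) ->
  [exists a : 2.-tuple (dval V), exists b : 2.-tuple (dval V),
     [&& val a == [:: inl p1; inl p2], val b == [:: inl q1; inl q2] & stc_rel R a b]] =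
  stc_rel r (p1, p2) (q1, q2).
Proof.
move=> himg hr; rewrite -(stc_transfer h2_inj himg hr).
apply/idP/idP => [/existsP [a /existsP [b /and3P [/eqP ha /eqP hb st]]]|st].
  have ea : a = h2 (p1, p2) by apply/val_inj; rewrite ha.
  have eb : b = h2 (q1, q2) by apply/val_inj; rewrite hb.
  by rewrite -ea -eb.
apply/existsP; exists (h2 (p1, p2)); apply/existsP; exists (h2 (q1, q2)); by rewrite !eqxx.
Qed.

Lemma eval_stc2 A B A' B' g x y z t sa na :
  eval E (FStc [:: inl A; inl B] [:: inl A'; inl B'] g [:: inl x; inl y] [:: inl z; inl t]) sa na =
  stc_rel (fun p q : V * V => eval E g (upd (upd (upd (upd sa A p.1) B p.2) A' q.1) B' q.2) na)
    (sa x, sa y) (sa z, sa t).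
Proof.
rewrite eval_FStc; apply: stc_key.
  by move=> a b /and3P [/ws2 h1 /ws2 h2 _].
by [].
Qed.

Lemma eq_stc (T : finType) (r1 r2 : rel T) a b : r1 =2 r2 -> stc_rel r1 a b = stc_rel r2 a b.
Proof.
move=> H; rewrite /stc_rel; apply: eq_existsb => c; rewrite !H.
by rewrite (@eq_connect _ _ (fun x y => r2 x y || r2 y x)) // => x y; rewrite !H.
Qed.

Lemma eval_Gstep ed (e : rel V) sa na :
  (forall a b sa na, eval E (ed a b) sa na = e (sa a) (sa b)) ->
  eval E (Gstep ed) sa na = gstep e (sa 100, sa 101) (sa 102, sa 103).
Proof.
move=> Hed; rewrite /Gstep /= !Hed /gstep /= negb_and !negbK.
by rewrite !andbA.
Qed.

Lemma neqbig x k : x < 100 -> 100 <= k -> (x == k) = false.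
Proof. by move=> h1 h2; apply/negbTE; lia. Qed.

Lemma eval_FEq x y sa na : eval E (FEq x y) sa na = (sa x == sa y).
Proof. by []. Qed.
Lemma eval_FExS x g sa na : eval E (FExS x g) sa na = [exists a, eval E g (upd sa x a) na].
Proof. by []. Qed.
Lemma eval_FExN x g sa na : eval E (FExN x g) sa na = [exists a, eval E g sa (upd na x a)].
Proof. by []. Qed.
Lemma eval_FAnd f g sa na : eval E (FAnd f g) sa na = eval E f sa na && eval E g sa na.
Proof. by []. Qed.
Lemma eval_FNot f sa na : eval E (FNot f) sa na = ~~ eval E f sa na.
Proof. by []. Qed.

Lemma updN (T : Type) (f : nat -> T) a x k : x < 100 -> 100 <= k -> upd f k a x = f x.
Proof. by move=> h1 h2; rewrite /upd neqbig. Qed.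
Lemma upd_id (T : Type) (f : nat -> T) a k : upd f k a k = a.
Proof. by rewrite /upd eqxx. Qed.

Lemma eval_Cls ed (e : rel V) x y z sa na :
  (forall a b sa na, eval E (ed a b) sa na = e (sa a) (sa b)) ->
  x < 100 -> y < 100 -> z < 100 ->
  eval E (Cls ed x y z) sa na = (sa z \in Xset e (sa x) (sa y)).
Proof.
move=> Hed hx hy hz.
rewrite /Cls !eval_For !eval_FEq eval_FExS.
have -> : [exists t, eval E (FStc [:: inl 100; inl 101] [:: inl 102; inl 103]
      (Gstep ed) [:: inl x; inl y] [:: inl z; inl 104]) (upd sa 104 t) na] =
   [exists t, stc_rel (gstep e) (sa x, sa y) (sa z, t)].
  apply: eq_existsb => t; rewrite eval_stc2.
  rewrite !(updN _ _ hx) // !(updN _ _ hy) // !(updN _ _ hz) // upd_id.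
  by apply: eq_stc => p q; rewrite (eval_Gstep _ _ Hed).
rewrite inE orbA; apply/idP/idP => /orP [-> //|/existsP [t h]]; apply/orP.
  by right; apply/existsP; exists t; apply: stc_connect.
case: (connect_stc h) => [[-> _]|st]; first by left; rewrite eqxx.
by right; apply/existsP; exists t.
Qed.

Definition Mf x y z :=
  For (FAnd (FEq x y) (FEq z x))
   (For (FAnd (FNot (FEq x y)) (FAnd (FEdge x y) (Cls FEdge x y z)))
        (FAnd (FNot (FEq x y)) (FAnd (FNot (FEdge x y)) (Cls Fcedge x y z)))).

Lemma eval_M x y z sa na : x < 100 -> y < 100 -> z < 100 ->
  eval E (Mf x y z) sa na = (sa z \in Mc E (sa x) (sa y)).
Proof.
move=> hx hy hz; rewrite /Mf eval_For eval_For !eval_FAnd.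
rewrite (@eval_Cls FEdge E x y z sa na (fun _ _ _ _ => erefl) hx hy hz).
rewrite (@eval_Cls Fcedge (compl E) x y z sa na (fun _ _ _ _ => erefl) hx hy hz).
rewrite !eval_FNot !eval_FEq.
rewrite /Mc; case: eqP => [->|nxy] /=; first by rewrite inE orbF.
by case: ifP; rewrite /= ?orbF.
Qed.


Lemma updN2 (T : Type) (f : nat -> T) a x k : x != k -> upd f k a x = f x.
Proof. by move=> h; rewrite /upd (negbTE h). Qed.

Definition Sf v w y := For (FNot (Mf v y w)) (Mf v w y).

Lemma eval_S v w y sa na : v < 100 -> w < 100 -> y < 100 ->
  eval E (Sf v w y) sa na = (sa y \in Sset E (sa v) (sa w)).
Proof.
move=> hv hw hy; rewrite /Sf eval_For eval_FNot !eval_M //.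
by rewrite /Sset inE.
Qed.

Lemma eval_FCount us g ps sa na : eval E (FCount us g ps) sa na =
  (#|[pred t : (size us).-tuple (dval V) |
          wellsorted us t && eval E g (assign us t sa na).1 (assign us t sa na).2]|
      == \sum_(j < size ps) (na (nth 0 ps j) : nat) * (#|V|).+1 ^ j).
Proof. by []. Qed.

Lemma sum1 (na : nat -> num V) q : \sum_(j < size [:: q]) (na (nth 0 [:: q] j) : nat) * (#|V|).+1 ^ j = na q.
Proof. by rewrite big_ord1 /= expn0 muln1. Qed.

Lemma card_inl Y (P : (nat -> V) -> (nat -> num V) -> bool) sa na :
  #|[pred t : (size [:: (inl Y : var)]).-tuple (dval V) | wellsorted [:: inl Y] t &&
      P (assign [:: inl Y] t sa na).1 (assign [:: inl Y] t sa na).2]| =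
  #|[pred a : V | P (upd sa Y a) na]|.
Proof.
pose g := fun a : V => [tuple (inl a : dval V)].
have ginj : injective g by move=> a b /(congr1 val) [].
have -> : #|[pred a : V | P (upd sa Y a) na]| = #|g @: [set a | P (upd sa Y a) na]|.
  by rewrite card_imset //; apply: eq_card => a; rewrite inE.
apply: eq_card => t; rewrite !inE.
case: t => [[|[a|k] []] //= Ht].
  apply/idP/imsetP => [Pa|[b]]; first by exists a; rewrite ?inE //; apply/val_inj.
  by rewrite inE => Pb /(congr1 val) [->].
by apply/esym/negbTE/imsetP => [[b _ /(congr1 val) []]] h; discriminate h.
Qed.

Lemma card_inr Q (P : (nat -> V) -> (nat -> num V) -> bool) sa na :
  #|[pred t : (size [:: (inr Q : var)]).-tuple (dval V) | wellsorted [:: inr Q] t &&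
      P (assign [:: inr Q] t sa na).1 (assign [:: inr Q] t sa na).2]| =
  #|[pred k : num V | P sa (upd na Q k)]|.
Proof.
pose g := fun k : num V => [tuple (inr k : dval V)].
have ginj : injective g by move=> a b /(congr1 val) [].
have -> : #|[pred k : num V | P sa (upd na Q k)]| = #|g @: [set k | P sa (upd na Q k)]|.
  by rewrite card_imset //; apply: eq_card => a; rewrite inE.
apply: eq_card => t; rewrite !inE.
case: t => [[|[a|k] []] //= Ht].
  by apply/esym/negbTE/imsetP => [[b _ /(congr1 val) []]] h; discriminate h.
apply/idP/imsetP => [Pa|[b]]; first by exists k; rewrite ?inE //; apply/val_inj.
by rewrite inE => Pb /(congr1 val) [->].
Qed.

Definition Sizef v w q := FCount [:: inl 50] (Sf v w 50) [:: q].

Lemma eval_Size v w q sa na : v < 100 -> w < 100 -> v != 50 -> w != 50 ->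
  eval E (Sizef v w q) sa na = (#|Sset E (sa v) (sa w)| == na q).
Proof.
move=> hv hw nv nw; rewrite /Sizef eval_FCount card_inl sum1.
congr (_ == _); apply: eq_card => a; rewrite [in LHS]inE eval_S //.
by rewrite upd_id !updN2.
Qed.

Definition Idxf v w r :=
  FCount [:: inr 51] (FAnd (FExS 52 (Sizef v 52 51))
                           (FExN 53 (FAnd (Sizef v w 53) (FNot (FLe 51 53))))) [:: r].

Lemma eval_Idx v w r sa na : v < 100 -> w < 100 -> v != 50 -> w != 50 -> v != 52 -> w != 52 ->
  eval E (Idxf v w r) sa na = (cnt E (sa v) (sa w) == na r).
Proof.
move=> hv hw nv nw nv2 nw2; rewrite /Idxf eval_FCount card_inr sum1.
congr (_ == _); apply: eq_card => k; rewrite [in LHS]inE eval_FAnd eval_FExS eval_FExN.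
have -> : [exists a, eval E (Sizef v 52 51) (upd sa 52 a) (upd na 51 k)] =
          [exists w', #|Sset E (sa v) w'| == k].
  by apply: eq_existsb => a; rewrite eval_Size // upd_id updN2 // upd_id.
have -> : [exists k', eval E (FAnd (Sizef v w 53) (FNot (FLe 51 53))) sa (upd (upd na 51 k) 53 k')] =
          (#|Sset E (sa v) (sa w)| < k).
  apply/existsP/idP => [[k']|lt].
    rewrite eval_FAnd eval_Size // eval_FNot /= => /andP [/eqP ->].
    by rewrite /upd /= -ltnNge.
  have sb : #|Sset E (sa v) (sa w)| < #|V|.+1 by rewrite ltnS max_card.
  exists (inord #|Sset E (sa v) (sa w)|).
  rewrite eval_FAnd eval_Size // eval_FNot /= /upd /= inordK // eqxx /= -ltnNge.
  exact: lt.
by [].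
Qed.

Lemma cnt_bound v0 w : cnt E v0 w <= #|V|.
Proof.
rewrite /cnt; apply: leq_trans (_ : #|predC1 (ord0 : num V)| <= _); last by rewrite cardC1 card_ord.
apply: subset_leq_card; apply/subsetP => q; rewrite !inE => /andP [_ lt].
by apply/eqP => q0; rewrite q0 in lt.
Qed.

Definition phi :=
  For (FEq 0 1) (FExS 2 (FAnd (Sf 0 2 1) (FExN 2 (FAnd (Idxf 0 2 2) (FLe 0 2))))).

Lemma eval_phi sa na : eval E phi sa na =
  (sa 0 == sa 1) || [exists w, (sa 1 \in Sset E (sa 0) w) && (na 0 <= cnt E (sa 0) w)].
Proof.
rewrite /phi eval_For eval_FEq eval_FExS; congr (_ || _); apply: eq_existsb => w.
rewrite eval_FAnd eval_S // eval_FExN.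
congr (_ && _).
apply/existsP/idP => [[r]|le].
  by rewrite eval_FAnd eval_Idx // /= /upd /= => /andP [/eqP ->].
exists (inord (cnt E (sa 0) w)).
rewrite eval_FAnd eval_Idx // /= /upd /= inordK ?ltnS ?cnt_bound // eqxx.
exact: le.
Qed.

End Sem.



Theorem theorem3p16 :
  exists phi : formula,
    {subset fv phi <= [:: inr 0; inl 0; inl 1]} /\
    forall (V : finType) (E : rel V),
      irreflexive E -> symmetric E -> (0 < #|V|)%N ->
      forall (i : num V) (v u : V) (sa : nat -> V) (na : nat -> num V),
        sa 0%N = v -> sa 1%N = u -> na 0%N = i ->
        eval E phi sa na = (u \in Dmod E i v).
Proof.
exists phi; split.
  have H : all (fun x => x \in [:: inr 0; inl 0; inl 1]) (fv phi) by vm_compute.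
  by move=> x xf; exact: (allP H x xf).
move=> V E Eirr Esym _ i v u sa na h0 h1 h2.
by rewrite eval_phi h0 h1 h2 (main_char Esym).
Qed.
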